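(* Let $d\ge3$, let $\mathcal{H}_A=\mathcal{H}_B=\mathbb{C}^d$ with fixed orthonormal bases, and $\mathcal{H}=\mathcal{H}_A\otimes\mathcal{H}_B$. None of the Werner states $\rho_W(t)=1-tF$ with $t\in(1/d,1/2]$ is $2$-distillable if and only if $$\|X\otimes U+Y\otimes V\|^2-\tfrac12\|X^TU+Y^TV\|^2-\tfrac12\|UX^T+VY^T\|^2+\tfrac14|\operatorname{tr}(X^TU+Y^TV)|^2\ge0$$ for all $X,Y,U,V\in M_d(\mathbb{C})$.
   Context: The flip operator is $F=\sum_{i,j}|i,j\rangle\langle j,i|$ on $\mathcal{H}$; its partial transpose is $dP$ with $P=\frac1d\sum_{i,j}|i,i\rangle\langle j,j|$, so the partial transpose of $\rho_W(t)$ is $1-tdP$. A bipartite state $\rho$ on $\mathcal{H}$ is called $k$-distillable if there exists a (non-normalized) vector $|\psi\rangle\in\mathcal{H}^{\otimes k}$, regarded as a bipartite vector in $\mathcal{H}_A^{\otimes k}\otimes\mathcal{H}_B^{\otimes k}$, of Schmidt rank at most two such that $\langle\psi|\sigma^{\otimes k}|\psi\rangle<0$, where $\sigma=1\otimes T(\rho)$ is the partial transpose of $\rho$. $\|Z\|^2=\operatorname{tr}(Z^\dagger Z)$ is the Frobenius norm, and $A\otimes B=[a_{ij}B]$ for $A=[a_{ij}]$. *)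

(* Defs.v *)
From HB Require Import structures.
From mathcomp Require Import all_boot all_order all_algebra.
From mathcomp Require Import reals.
From mathcomp Require Import complex mxtens.

Set Implicit Arguments.
Unset Strict Implicit.
Unset Printing Implicit Defensive.

Import Order.TTheory GRing.Theory Num.Theory.
Local Open Scope ring_scope.
Local Open Scope complex_scope.

Section QuantumDefs.
Variable R : realType.
Local Notation C := (R[i]).

(* H = H_A (x) H_B = C^d (x) C^d, basis |i,j> = e_i (x) e_j, stored at index
   mxtens_index (i, j) = i*d + j  (Kronecker convention A (x) B = [a_ij B]). *)

Definition adjmx {m n} (Z : 'M[C]_(m, n)) : 'M[C]_(n, m) := (map_mx conjc Z)^T.

Definition fnorm2 {n} (Z : 'M[C]_n) : C := \tr (adjmx Z *m Z).

Definition flip (d : nat) : 'M[C]_(d * d) :=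
  \matrix_(p, q) (if ((mxtens_unindex p).1 == (mxtens_unindex q).2)
                    && ((mxtens_unindex p).2 == (mxtens_unindex q).1)
                  then 1 else 0).

(* Werner state rho_W(t) = 1 - t F  (non-normalized) *)
Definition werner (d : nat) (t : R) : 'M[C]_(d * d) := 1%:M - t%:C *: flip d.

Definition ptrans (d : nat) (rho : 'M[C]_(d * d)) : 'M[C]_(d * d) :=
  \matrix_(p, q) rho (mxtens_index ((mxtens_unindex p).1, (mxtens_unindex q).2))
                     (mxtens_index ((mxtens_unindex q).1, (mxtens_unindex p).2)).

(* A vector psi in H^{(x)2} = (H_A (x) H_B) (x) (H_A (x) H_B), with coordinates
   psi_{(a1,b1),(a2,b2)}, regarded as a bipartite vector in
   (H_A (x) H_A) (x) (H_B (x) H_B): its coefficient matrix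
   M_{(a1,a2),(b1,b2)} = psi_{(a1,b1),(a2,b2)}. *)
Definition bipartite_coef (d : nat) (psi : 'cV[C]_((d * d) * (d * d)))
  : 'M[C]_(d * d, d * d) :=
  \matrix_(a, b)
    psi (mxtens_index
           (mxtens_index ((mxtens_unindex a).1, (mxtens_unindex b).1),
            mxtens_index ((mxtens_unindex a).2, (mxtens_unindex b).2))) 0.

Definition schmidt_rank2 (d : nat) (psi : 'cV[C]_((d * d) * (d * d))) : nat :=
  \rank (bipartite_coef psi).

Definition two_distillable (d : nat) (rho : 'M[C]_(d * d)) : Prop :=
  exists psi : 'cV[C]_((d * d) * (d * d)),
    (schmidt_rank2 psi <= 2)%N /\
    (adjmx psi *m (ptrans rho *t ptrans rho) *m psi) 0 0 < 0.

End QuantumDefs.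

(* Main.v *)
Require Import Defs.
From HB Require Import structures.
From mathcomp Require Import all_boot all_order all_algebra.
From mathcomp Require Import reals.
From mathcomp Require Import complex mxtens.
From mathcomp Require Import ring.
Import Order.TTheory GRing.Theory Num.Theory.
Local Open Scope ring_scope.
Set Implicit Arguments.
Unset Strict Implicit.
Unset Printing Implicit Defensive.
Section Aux.
Variable R : realType.
Local Open Scope complex_scope.
Local Notation C := (R[i]).
Local Notation idx := mxtens_index.
Local Notation unidx := mxtens_unindex.

Lemma sum_tens m n (F : 'I_(m * n) -> C) :
  \sum_k F k = \sum_i \sum_j F (idx (i, j)).
Proof.
rewrite pair_big (reindex (@mxtens_index m n)) /=; last first.
  by exists (@mxtens_unindex m n) => k _; rewrite (mxtens_indexK, mxtens_unindexK).
by apply: eq_bigr => -[i j].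
Qed.

Lemma sum_delta (I : finType) (i : I) (F : I -> C) :
  \sum_j F j * (i == j)%:R = F i.
Proof.
rewrite (bigD1 i) //= eqxx mulr1 big1 ?addr0 // => j /negbTE.
by rewrite eq_sym => ->; rewrite mulr0.
Qed.

Lemma fnorm2E n (Z : 'M[C]_n) : fnorm2 Z = \sum_i \sum_j (Z i j)^*%C * Z i j.
Proof.
rewrite /fnorm2 /mxtrace exchange_big /=; apply: eq_bigr => j _.
by rewrite mxE; apply: eq_bigr => i _; rewrite !mxE.
Qed.

Lemma sumJ_ge0 (I : finType) (F : I -> C) : 0 <= \sum_i (F i)^*%C * F i.
Proof. by apply: sumr_ge0 => i _; rewrite mulrC mulcJ_ge0. Qed.

Lemma fnorm2_ge0 n (Z : 'M[C]_n) : 0 <= fnorm2 Z.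
Proof. by rewrite fnorm2E; apply: sumr_ge0 => i _; apply: sumJ_ge0. Qed.

Lemma fnorm2_tr n (Z : 'M[C]_n) : fnorm2 Z^T = fnorm2 Z.
Proof. by rewrite !fnorm2E exchange_big; apply: eq_bigr=> i _; apply: eq_bigr => j _; rewrite mxE. Qed.

End Aux.
Section Q.
Variable R : realType.
Local Open Scope complex_scope.
Variable d : nat.
Local Notation C := (R[i]).
Local Notation idx := mxtens_index.
Local Notation unidx := mxtens_unindex.
Local Notation n := (d * d)%N.

Definition om (p : 'I_n) : C := ((unidx p).1 == (unidx p).2)%:R.
Definition Kmx : 'M[C]_n := \matrix_(p, q) (om p * om q).
Definition PsiM (psi : 'cV[C]_(n * n)) : 'M[C]_n := \matrix_(p, q) psi (idx (p, q)) 0.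
Definition Mof (P : 'M[C]_n) : 'M[C]_d := \matrix_(a, b) \sum_i P (idx (i, i)) (idx (a, b)).
Definition Nof (P : 'M[C]_n) : 'M[C]_d := \matrix_(a, b) \sum_i P (idx (a, b)) (idx (i, i)).
Definition cof (P : 'M[C]_n) : C := \sum_i \sum_j P (idx (i, i)) (idx (j, j)).
Definition qf (psi : 'cV[C]_(n * n)) (M : 'M[C]_(n * n)) : C := (adjmx psi *m M *m psi) 0 0.

Lemma ptrans_werner t : ptrans (werner d t) = 1%:M - t%:C *: Kmx.
Proof.
apply/matrixP => p q; rewrite !mxE.
case: (mxtens_indexP p) => a b; case: (mxtens_indexP q) => c e.
rewrite !mxtens_indexK /= !(inj_eq (can_inj (@mxtens_indexK _ _))) !xpair_eqE.
rewrite /om !mxtens_indexK /= [e == b]eq_sym [e == c]eq_sym.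
by case: (a == c); case: (b == e); case: (a == b); case: (c == e);
  rewrite /= ?(mul1r, mul0r, mulr1, mulr0).
Qed.

Lemma qfD psi M1 M2 : qf psi (M1 + M2) = qf psi M1 + qf psi M2.
Proof. by rewrite /qf mulmxDr mulmxDl mxE. Qed.
Lemma qfN psi M : qf psi (- M) = - qf psi M.
Proof. by rewrite /qf mulmxN mulNmx mxE. Qed.
Lemma qfZ psi c M : qf psi (c *: M) = c * qf psi M.
Proof. by rewrite /qf -scalemxAr -scalemxAl mxE. Qed.

Lemma tensS (t : C) (K : 'M[C]_n) :
  (1%:M - t *: K) *t (1%:M - t *: K) =
  (1%:M *t 1%:M) - t *: (K *t 1%:M) - t *: (1%:M *t K) + (t * t) *: (K *t K).
Proof. by apply/matrixP => i j; rewrite !mxE; ring. Qed.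

Lemma qf_tens psi (A B : 'M[C]_n) :
  qf psi (A *t B) = \sum_q1 \sum_q2 (\sum_p1 \sum_p2
     ((PsiM psi) p1 p2)^*%C * (A p1 q1 * B p2 q2)) * (PsiM psi) q1 q2.
Proof.
rewrite /qf mxE sum_tens; apply: eq_bigr => q1 _; apply: eq_bigr => q2 _.
rewrite mxE sum_tens [PsiM _ _ _]mxE; congr (_ * _).
apply: eq_bigr => p1 _; apply: eq_bigr => p2 _.
by rewrite tensmxE !mxE.
Qed.

Lemma sum_deltaL (I : finType) (i : I) (F : I -> C) :
  \sum_j (j == i)%:R * F j = F i.
Proof.
rewrite -[RHS](sum_delta i); apply: eq_bigr => j _.
by rewrite mulrC eq_sym.
Qed.

Lemma omJ p : (om p)^*%C = om p :> C.
Proof. by rewrite /om conjc_nat. Qed.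

Lemma sum_om (F : 'I_n -> C) : \sum_p om p * F p = \sum_i F (idx (i, i)).
Proof.
rewrite sum_tens; apply: eq_bigr => i _.
rewrite -[RHS](sum_deltaL i (fun j => F (idx (i, j)))); apply: eq_bigr => j _.
by rewrite /om mxtens_indexK /= eq_sym.
Qed.

Lemma inner_split (P A B : 'M[C]_n) q1 q2 :
  \sum_p1 \sum_p2 (P p1 p2)^*%C * (A p1 q1 * B p2 q2) =
  \sum_p1 A p1 q1 * \sum_p2 B p2 q2 * (P p1 p2)^*%C.
Proof.
apply: eq_bigr => p1 _; rewrite mulr_sumr; apply: eq_bigr => p2 _; ring.
Qed.

Lemma sum_id (P : 'I_n -> C) q : \sum_p (1%:M : 'M[C]_n) p q * P p = P q.
Proof. by rewrite -[RHS](sum_deltaL q); apply: eq_bigr => p _; rewrite mxE. Qed.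

Lemma sum_K (P : 'I_n -> C) q : \sum_p Kmx p q * P p = om q * \sum_p om p * P p.
Proof. by rewrite mulr_sumr; apply: eq_bigr => p _; rewrite mxE; ring. Qed.

Lemma fnorm2_tens m (F : 'I_(m * m) -> C) :
  \sum_k (F k)^*%C * F k = fnorm2 (\matrix_(a, b) F (idx (a, b)) : 'M[C]_m).
Proof. by rewrite fnorm2E sum_tens; apply: eq_bigr => a _; apply: eq_bigr => b _; rewrite mxE. Qed.

Lemma conj_om_sum (F : 'I_n -> C) : (\sum_p om p * F p)^*%C = \sum_p om p * (F p)^*%C.
Proof. by rewrite rmorph_sum; apply: eq_bigr => p _; rewrite rmorphM /= omJ. Qed.

Variable psi : 'cV[C]_(n * n).
Local Notation P := (PsiM psi).

Lemma qf11 : qf psi (1%:M *t 1%:M) = fnorm2 P.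
Proof.
rewrite qf_tens fnorm2E; apply: eq_bigr => q1 _; apply: eq_bigr => q2 _.
rewrite inner_split.
under eq_bigr => p1 _ do rewrite (sum_id (fun p2 => (P p1 p2)^*%C)).
by rewrite (sum_id (fun p1 => (P p1 q2)^*%C)).
Qed.

Lemma qfK1 : qf psi (Kmx *t 1%:M) = fnorm2 (Mof P).
Proof.
rewrite qf_tens.
under eq_bigr => q1 _ do under eq_bigr => q2 _ do rewrite inner_split.
under eq_bigr => q1 _ do under eq_bigr => q2 _ do
  under eq_bigr => p1 _ do rewrite (sum_id (fun p2 => (P p1 p2)^*%C)).
under eq_bigr => q1 _ do under eq_bigr => q2 _ do
  rewrite (sum_K (fun p1 => (P p1 q2)^*%C)).
rewrite exchange_big /=.
transitivity (\sum_q2 (\sum_p om p * P p q2)^*%C * (\sum_p om p * P p q2)).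
  apply: eq_bigr => q2 _; rewrite mulr_sumr; apply: eq_bigr => q1 _.
  rewrite (conj_om_sum (fun p => P p q2)). ring.
rewrite fnorm2_tens; congr fnorm2; apply/matrixP => a b; rewrite !mxE.
by rewrite sum_om; apply: eq_bigr => i _; rewrite mxE.
Qed.


Lemma qf1K : qf psi (1%:M *t Kmx) = fnorm2 (Nof P).
Proof.
rewrite qf_tens.
under eq_bigr => q1 _ do under eq_bigr => q2 _ do rewrite inner_split.
under eq_bigr => q1 _ do under eq_bigr => q2 _ do
  under eq_bigr => p1 _ do rewrite (sum_K (fun p2 => (P p1 p2)^*%C)).
under eq_bigr => q1 _ do under eq_bigr => q2 _ do
  rewrite (sum_id (fun p1 => om q2 * \sum_p om p * (P p1 p)^*%C)).
transitivity (\sum_q1 (\sum_p om p * P q1 p)^*%C * (\sum_p om p * P q1 p)).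
  apply: eq_bigr => q1 _; rewrite mulr_sumr; apply: eq_bigr => q2 _.
  rewrite (conj_om_sum (fun p => P q1 p)). ring.
rewrite fnorm2_tens; congr fnorm2; apply/matrixP => a b; rewrite !mxE.
by rewrite sum_om; apply: eq_bigr => i _; rewrite mxE.
Qed.

Lemma cofE : cof P = \sum_p1 om p1 * \sum_p2 om p2 * P p1 p2.
Proof.
rewrite sum_om /cof; apply: eq_bigr => i _.
by rewrite sum_om; apply: eq_bigr => j _.
Qed.

Lemma qfKK : qf psi (Kmx *t Kmx) = cof P * (cof P)^*%C.
Proof.
rewrite qf_tens.
under eq_bigr => q1 _ do under eq_bigr => q2 _ do rewrite inner_split.
under eq_bigr => q1 _ do under eq_bigr => q2 _ do
  under eq_bigr => p1 _ do rewrite (sum_K (fun p2 => (P p1 p2)^*%C)).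
under eq_bigr => q1 _ do under eq_bigr => q2 _ do
  rewrite (sum_K (fun p1 => om q2 * \sum_p om p * (P p1 p)^*%C)).
rewrite cofE [RHS]mulrC mulr_sumr; apply: eq_bigr => q1 _.
rewrite mulrCA mulr_sumr mulr_sumr; apply: eq_bigr => q2 _.
rewrite (conj_om_sum (fun p1 => \sum_p2 om p2 * P p1 p2)).
under [in RHS]eq_bigr => p1 _ do rewrite (conj_om_sum (fun p2 => P p1 p2)).
set T := \sum_(p < n) om p * \sum_(p0 < n) om p0 * (P p p0)^*%C.
have -> : \sum_p om p * (om q2 * \sum_p0 om p0 * (P p p0)^*%C) = om q2 * T.
  by rewrite /T mulr_sumr; apply: eq_bigr => p _; ring.
ring.
Qed.

Lemma qf_werner (t : R) :
  qf psi (ptrans (werner d t) *t ptrans (werner d t)) =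
  fnorm2 P - t%:C * (fnorm2 (Mof P) + fnorm2 (Nof P))
  + t%:C * t%:C * (cof P * (cof P)^*%C).
Proof.
rewrite ptrans_werner tensS !qfD !qfN !qfZ qf11 qfK1 qf1K qfKK; ring.
Qed.

End Q.
Section CS.
Variable R : realType.
Local Open Scope complex_scope.
Local Notation C := (R[i]).
Variable I : finType.
Implicit Types f g x y u v : I -> C.

Definition nr f := \sum_k (f k)^*%C * f k.
Definition ip f g := \sum_k (f k)^*%C * g k.
Definition bl f g := \sum_k f k * g k.

Lemma nr_ge0 f : 0 <= nr f.
Proof. exact: sumJ_ge0. Qed.

Lemma nrJ f : (nr f)^*%C = nr f.
Proof. by rewrite rmorph_sum; apply: eq_bigr => k _; rewrite rmorphM /= conjcK mulrC. Qed.

Lemma nr0 f : nr f = 0 -> forall k, f k = 0.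
Proof.
move=> /eqP; rewrite /nr psumr_eq0 => [/allP H k|k _]; last by rewrite mulrC mulcJ_ge0.
have /H : k \in index_enum I by rewrite mem_index_enum.
by rewrite /= mulf_eq0 conjc_eq0 orbb => /eqP.
Qed.

Lemma ipC f g : (ip f g)^*%C = ip g f.
Proof. by rewrite rmorph_sum; apply: eq_bigr => k _; rewrite rmorphM /= conjcK mulrC. Qed.

Lemma sum_prod (a b : I -> C) : \sum_k \sum_l a k * b l = (\sum_k a k) * (\sum_l b l).
Proof. by rewrite mulr_suml; apply: eq_bigr => k _; rewrite mulr_sumr. Qed.

Lemma CS f g : bl f g * (bl f g)^*%C <= nr f * nr g.
Proof.
set S := nr f; set z := bl f g.
have [S0|SP] := eqVneq S 0.
  have f0 := nr0 S0.
  have -> : z = 0 by rewrite /z /bl big1 // => k _; rewrite f0 mul0r.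
  by rewrite S0 !mul0r.
have Sgt0 : 0 < S by rewrite lt_def SP nr_ge0.
have key : \sum_k (S * g k - z * (f k)^*%C)^*%C * (S * g k - z * (f k)^*%C)
           = S * (S * nr g - z * z^*%C).
  have SJ : S^*%C = S by apply: nrJ.
  transitivity (\sum_k (S * S * ((g k)^*%C * g k) - S * z * (f k * g k)^*%C
                 - S * z^*%C * (f k * g k) + z * z^*%C * ((f k)^*%C * f k))).
    apply: eq_bigr => k _.
    rewrite rmorphB !rmorphM /= SJ conjcK; ring.
  rewrite big_split /= sumrB sumrB -!mulr_sumr -rmorph_sum /=.
  rewrite -/(nr g) -/(nr f) -/(bl f g) -/S -/z; ring.
have : 0 <= S * (S * nr g - z * z^*%C) by rewrite -key; apply: sumJ_ge0.
by rewrite pmulr_rge0 // subr_ge0.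
Qed.

Lemma normD2 (a b : C) : (a + b) * (a + b)^*%C <= 2 * (a * a^*%C) + 2 * (b * b^*%C).
Proof.
rewrite -subr_ge0.
have -> : 2 * (a * a^*%C) + 2 * (b * b^*%C) - (a + b) * (a + b)^*%C
          = (a - b) * (a - b)^*%C by rewrite !rmorphD rmorphN /=; ring.
exact: mulcJ_ge0.
Qed.

Definition nr2 x u y v := \sum_k \sum_l (x k * u l + y k * v l)^*%C * (x k * u l + y k * v l).

Lemma ortho x u y v : ip x y = 0 -> nr2 x u y v = nr x * nr u + nr y * nr v.
Proof.
move=> H0.
have H1 : ip y x = 0 by rewrite -ipC H0 conjc0.
transitivity (\sum_k \sum_l (((x k)^*%C * x k) * ((u l)^*%C * u l)
   + ((y k)^*%C * y k) * ((v l)^*%C * v l)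
   + ((x k)^*%C * y k) * ((u l)^*%C * v l)
   + ((y k)^*%C * x k) * ((v l)^*%C * u l))).
  apply: eq_bigr => k _; apply: eq_bigr => l _.
  rewrite rmorphD !rmorphM /=; ring.
under eq_bigr => k _ do rewrite !big_split /=.
rewrite !big_split /= !sum_prod -/(nr x) -/(nr u) -/(nr y) -/(nr v) -/(ip x y) -/(ip y x).
by rewrite H0 H1 !mul0r !addr0.
Qed.

Lemma mainineq x u y v :
  (bl x u + bl y v) * (bl x u + bl y v)^*%C <= 2 * nr2 x u y v.
Proof.
wlog H : y u / ip x y = 0.
  move=> W.
  set lam := ip x y / nr x.
  have [/nr0 x0|xn0] := eqVneq (nr x) 0.
    apply: W; rewrite /ip big1 // => k _; rewrite x0 rmorph0 mul0r //.
  pose y' := fun k => y k - lam * x k.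
  pose u' := fun k => u k + lam * v k.
  have E1 : bl x u + bl y v = bl x u' + bl y' v.
    rewrite /bl -!big_split /=; apply: eq_bigr => k _; rewrite /u' /y'; ring.
  have E2 : nr2 x u y v = nr2 x u' y' v.
    by apply: eq_bigr => k _; apply: eq_bigr => l _; rewrite /u' /y'; congr (_^*%C * _); ring.
  rewrite E1 E2; apply: W.
  rewrite /ip /y'.
  transitivity (ip x y - lam * nr x).
    rewrite /ip /nr mulr_sumr -sumrB; apply: eq_bigr => k _; ring.
  by rewrite /lam mulfVK // subrr.
rewrite (ortho u v H).
apply: (le_trans (normD2 _ _)).
rewrite mulrDr lerD // ler_pM2l ?ltr0n //; exact: CS.
Qed.

End CS.
Section Main.
Variable R : realType.
Local Open Scope complex_scope.
Variable d : nat.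
Local Notation C := (R[i]).
Local Notation idx := mxtens_index.
Local Notation n := (d * d)%N.
Implicit Types X Y U V : 'M[C]_d.

Lemma tensE X U a1 b1 a2 b2 : (X *t U) (idx (a1, b1)) (idx (a2, b2)) = X a1 a2 * U b1 b2.
Proof. exact: tensmxE. Qed.

Lemma Mof_tens X Y U V : Mof (X *t U + Y *t V) = X^T *m U + Y^T *m V.
Proof.
apply/matrixP => a b; rewrite !mxE -big_split /=; apply: eq_bigr => i _.
by rewrite !mxE !mxtens_indexK.
Qed.

Lemma Nof_tens X Y U V : Nof (X *t U + Y *t V) = (U *m X^T + V *m Y^T)^T.
Proof.
apply/matrixP => a b; rewrite !mxE -big_split /=; apply: eq_bigr => i _.
by rewrite !mxE !mxtens_indexK /= [U _ _ * _]mulrC [V _ _ * _]mulrC.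
Qed.

Lemma cof_tens X Y U V : cof (X *t U + Y *t V) = \tr (X^T *m U + Y^T *m V).
Proof.
rewrite /cof /mxtrace exchange_big /=; apply: eq_bigr => j _.
rewrite !mxE -big_split /=; apply: eq_bigr => i _.
by rewrite !mxE !mxtens_indexK.
Qed.

Definition vecf (X : 'M[C]_d) (k : 'I_n) : C := X (mxtens_unindex k).1 (mxtens_unindex k).2.

Lemma ineq_tens X Y U V :
  \tr (X^T *m U + Y^T *m V) * (\tr (X^T *m U + Y^T *m V))^*%C
  <= 2 * fnorm2 (X *t U + Y *t V).
Proof.
have E1 : \tr (X^T *m U + Y^T *m V) = bl (vecf X) (vecf U) + bl (vecf Y) (vecf V).
  rewrite /bl -big_split sum_tens /mxtrace [RHS]exchange_big /=; apply: eq_bigr => j _.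
  rewrite !mxE -big_split /=; apply: eq_bigr => i _.
  by rewrite !mxE /vecf !mxtens_indexK.
have E2 : fnorm2 (X *t U + Y *t V) = nr2 (vecf X) (vecf U) (vecf Y) (vecf V).
  rewrite fnorm2E /nr2 sum_tens [RHS]sum_tens; apply: eq_bigr => a1 _.
  under eq_bigr => b1 _ do rewrite sum_tens.
  under [RHS]eq_bigr => a2 _ do rewrite sum_tens.
  rewrite exchange_big /=; apply: eq_bigr => a2 _; apply: eq_bigr => b1 _.
  by apply: eq_bigr => b2 _; rewrite !mxE /vecf !mxtens_indexK.
rewrite E1 E2; exact: mainineq.
Qed.

End Main.
Section Rank.
Variable R : realType.
Local Open Scope complex_scope.
Variable d : nat.
Local Notation C := (R[i]).
Local Notation idx := mxtens_index.
Local Notation n := (d * d)%N.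
Implicit Types X Y U V : 'M[C]_d.

Definition psi_of (P : 'M[C]_n) : 'cV[C]_(n * n) :=
  \col_k P (mxtens_unindex k).1 (mxtens_unindex k).2.

Lemma PsiM_of P : PsiM (psi_of P) = P.
Proof. by apply/matrixP => p q; rewrite !mxE mxtens_indexK. Qed.

Definition colv X : 'cV[C]_n := \col_k X (mxtens_unindex k).1 (mxtens_unindex k).2.
Definition rowv X : 'rV[C]_n := \row_k X (mxtens_unindex k).1 (mxtens_unindex k).2.

Lemma bcoef_tens X Y U V :
  bipartite_coef (psi_of (X *t U + Y *t V)) = colv X *m rowv U + colv Y *m rowv V.
Proof.
apply/matrixP => a b; rewrite !mxE !big_ord1 !mxE !mxtens_indexK /=.
by rewrite ?mxE ?mxtens_indexK.
Qed.

Lemma rank_tens X Y U V : (schmidt_rank2 (psi_of (X *t U + Y *t V)) <= 2)%N.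
Proof.
rewrite /schmidt_rank2 bcoef_tens.
apply: leq_trans (mxrank_add _ _) _.
apply: (@leq_add _ _ 1 1); apply: leq_trans (mxrankM_maxl _ _) _; exact: rank_leq_col.
Qed.

Lemma rank2_decomp m k (A : 'M[C]_(m, k)) : (\rank A <= 2)%N ->
  exists (x y : 'cV[C]_m) (u v : 'rV[C]_k), A = x *m u + y *m v.
Proof.
rewrite -{2}(mulmx_base A); move: (col_base A) (row_base A).
case: (\rank A) => [|[|[|r]]] // Cb Db _.
- exists 0, 0, 0, 0; rewrite (thinmx0 Cb) !mul0mx addr0 //.
- by exists Cb, 0, Db, 0; rewrite mul0mx addr0.
- exists (col 0 Cb), (col 1 Cb), (row 0 Db), (row 1 Db).
  apply/matrixP => i j; rewrite !mxE !big_ord_recl !big_ord0 !addr0 !mxE.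
  by congr (_ * _ + Cb i _ * Db _ j); apply: val_inj.
Qed.

Lemma psi_decomp (psi : 'cV[C]_(n * n)) : (schmidt_rank2 psi <= 2)%N ->
  exists X Y U V, PsiM psi = X *t U + Y *t V.
Proof.
move=> /rank2_decomp [x [y [u [v E]]]].
exists (\matrix_(a1, a2) x (idx (a1, a2)) 0), (\matrix_(a1, a2) y (idx (a1, a2)) 0).
exists (\matrix_(a1, a2) u 0 (idx (a1, a2))), (\matrix_(a1, a2) v 0 (idx (a1, a2))).
apply/matrixP => p q.
case: (mxtens_indexP p) => a1 b1; case: (mxtens_indexP q) => a2 b2.
have := congr1 (fun M : 'M[C]_(n, n) => M (idx (a1, a2)) (idx (b1, b2))) E.
rewrite /= !mxE !mxtens_indexK /= !big_ord1 => ->.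
by rewrite ?mxE ?mxtens_indexK.
Qed.

End Rank.
From mathcomp Require Import lra.

Lemma realC_half (R : realType) : (((2 : R)^-1)%:C)%C = 2^-1 :> R[i].
Proof. by rewrite fmorphV /= rmorph_nat. Qed.

Lemma realC2 (R : realType) (t : R) : (((2 : R) * t)%:C)%C = 2 * (t%:C)%C :> R[i].
Proof. by rewrite rmorphM /= rmorph_nat. Qed.

Unset Implicit Arguments.
Set Strict Implicit.

Theorem proposition3p2 (R : realType) (d : nat) :
  (3 <= d)%N ->
  ((forall t : R, (d%:R)^-1 < t -> t <= 2^-1 -> ~ two_distillable (werner d t))
   <->
   (forall X Y U V : 'M[R[i]]_d,
      0 <= fnorm2 (X *t U + Y *t V)
           - 2^-1 * fnorm2 (X^T *m U + Y^T *m V)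
           - 2^-1 * fnorm2 (U *m X^T + V *m Y^T)
           + 4^-1 * `|\tr (X^T *m U + Y^T *m V)| ^+ 2)).
Proof.
move=> d3; split.
- move=> H X Y U V.
  have t_ok : (d%:R : R)^-1 < 2^-1.
    rewrite ltf_pV2 ?posrE ?ltr0n ?ltr_nat //; by apply: leq_trans d3.
  have ND := H 2^-1 t_ok (lexx _).
  have HQ : qf (psi_of (X *t U + Y *t V))
              (ptrans (werner d 2^-1) *t ptrans (werner d 2^-1)) =
            fnorm2 (X *t U + Y *t V)
           - 2^-1 * fnorm2 (X^T *m U + Y^T *m V)
           - 2^-1 * fnorm2 (U *m X^T + V *m Y^T)
           + 4^-1 * `|\tr (X^T *m U + Y^T *m V)| ^+ 2.
    rewrite qf_werner PsiM_of Mof_tens Nof_tens cof_tens fnorm2_tr sqr_normc realC_half.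
    by field.
  have Ereal : fnorm2 (X *t U + Y *t V)
           - 2^-1 * fnorm2 (X^T *m U + Y^T *m V)
           - 2^-1 * fnorm2 (U *m X^T + V *m Y^T)
           + 4^-1 * `|\tr (X^T *m U + Y^T *m V)| ^+ 2 \is Num.real.
    { rewrite ?(rpredD, rpredB, rpredN, rpredM, rpredX) //.
      all: try (by apply: ger0_real; rewrite ?fnorm2_ge0 ?invr_ge0 ?ler0n ?normr_ge0).
    }
  rewrite real_leNgt ?real0 //; apply/negP => En; apply: ND.
  exists (psi_of (X *t U + Y *t V)); split; first exact: rank_tens.
  by rewrite -/(qf _ _) HQ.
- move=> H t td th [psi [rk Qneg]].
  have t0 : 0 < t by apply: lt_trans td; rewrite invr_gt0 ltr0n; apply: leq_trans d3.
  have [X [Y [U [V EP]]]] := psi_decomp rk.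
  move: Qneg; rewrite -/(qf _ _) qf_werner EP Mof_tens Nof_tens cof_tens fnorm2_tr.
  have h := H X Y U V; rewrite sqr_normc in h.
  have hi := ineq_tens X Y U V.
  set a := fnorm2 (X *t U + Y *t V) in h hi *.
  set bm := fnorm2 (X^T *m U + Y^T *m V) in h *.
  set bn := fnorm2 (U *m X^T + V *m Y^T) in h *.
  set c := _ * _^*%C in h hi *.
  have c0 : 0 <= c by exact: mulcJ_ge0.
  have T0 : 0 <= ((2 * t)%:C)%C by rewrite ler0c; lra.
  have T1 : 0 <= ((1 - 2 * t)%:C)%C by rewrite ler0c; lra.
  have T2 : 0 <= ((1 - t)%:C)%C by rewrite ler0c; lra.
  have -> : a - (t%:C)%C * (bm + bn) + (t%:C)%C * (t%:C)%C * c =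
     ((2 * t)%:C)%C * (a - 2^-1 * bm - 2^-1 * bn + 4^-1 * c)
     + ((1 - 2 * t)%:C)%C * (2^-1 * (2 * a - c) + 2^-1 * ((1 - t)%:C)%C * c).
    rewrite !rmorphB !rmorph1 !realC2 /=; by field.
  apply/negP; rewrite le_gtF //.
  apply: addr_ge0; apply: mulr_ge0 => //.
  apply: addr_ge0; apply: mulr_ge0; rewrite ?invr_ge0 ?ler0n ?subr_ge0 //.
  by apply: mulr_ge0; rewrite ?invr_ge0 ?ler0n.
Qed.
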